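(* Let $L=L_0\oplus L_1$ be a Lie superalgebra over a field $F$ of characteristic zero and let $I=I_0\oplus I_1$ be a nilpotent ($\mathbb Z_2$-graded) ideal of $L$ of finite codimension with $I^{m+1}=0$; put $d_0=\dim(L_0/I_0)$, $d_1=\dim(L_1/I_1)$. If $\lambda=(\lambda_1,\dots,\lambda_p)\vdash k$ and $\mu=(\mu_1,\dots,\mu_q)\vdash n-k$ are partitions with $m_{\lambda,\mu}\ne 0$ in the decomposition $\chi(P_{k,n-k}(L))=\sum_{\lambda\vdash k,\mu\vdash n-k}m_{\lambda,\mu}\chi_{\lambda,\mu}$, then $\lambda_{d_0+1}+\dots+\lambda_p\le m$ and $\mu_{d_1+1}+\dots+\mu_q\le m$.
   Context: $I^{m+1}=0$ means all products of $m+1$ elements of $I$ vanish. $F\{X,Y\}$ is the free nonassociative algebra on even generators $X$ and odd generators $Y$; $Id^{gr}(L)$ is the set of polynomials vanishing under all substitutions of even variables by elements of $L_0$ and odd variables by elements of $L_1$. $P_{k,n-k}$ is the space of multilinear polynomials in $x_1,\dots,x_k\in X$, $y_1,\dots,y_{n-k}\in Y$, and $P_{k,n-k}(L)=P_{k,n-k}/(P_{k,n-k}\cap Id^{gr}(L))$, an $S_k\times S_{n-k}$-module (the groups permuting the $x$'s and $y$'s). $\chi_{\lambda,\mu}$ is the character of the irreducible $S_k\times S_{n-k}$-module $M_\lambda\otimes M_\mu$; $m_{\lambda,\mu}$ is its multiplicity. Parts $\lambda_i$ with $i>p$ are taken as absent (so the sums are empty if $p\le d_0$, resp. $q\le d_1$).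 *)

(* Defs.v *)
From HB Require Import structures.
From mathcomp Require Import all_boot all_order all_algebra all_fingroup.
Set Implicit Arguments. Unset Strict Implicit. Unset Printing Implicit Defensive.
Import Order.TTheory GRing.Theory.
Local Open Scope ring_scope.

(* Binary trees: nonassociative monomials / bracketings. *)
Inductive btree (A : Type) := BLeaf of A | BNode of btree A & btree A.
Arguments BLeaf {A}. Arguments BNode {A}.

Fixpoint leaves A (t : btree A) : seq A :=
  match t with BLeaf a => [:: a] | BNode t1 t2 => leaves t1 ++ leaves t2 end.

Fixpoint bmap A B (f : A -> B) (t : btree A) : btree B :=
  match t with BLeaf a => BLeaf (f a) | BNode t1 t2 => BNode (bmap f t1) (bmap f t2) end.

Fixpoint beval A (L : Type) (br : L -> L -> L) (v : A -> L) (t : btree A) : L :=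
  match t with BLeaf a => v a | BNode t1 t2 => br (beval br v t1) (beval br v t2) end.

Section LieSuper.
Variables (F : fieldType) (L : lmodType F).

Definition subsp (A : L -> Prop) : Prop :=
  A 0 /\ forall (c : F) x y, A x -> A y -> A (c *: x + y).

(* sign (-1)^{|a||b|} *)
Definition ssign (i j : bool) : F := if i && j then -1 else 1.

(* L = L_0 (+) L_1 is a Lie superalgebra with bracket br; Lp false = L_0, Lp true = L_1 *)
Record lie_super (br : L -> L -> L) (Lp : bool -> L -> Prop) : Prop := {
  ls_sub : forall b, subsp (Lp b);
  ls_sum : forall x, exists x0 x1, [/\ Lp false x0, Lp true x1 & x = x0 + x1];
  ls_direct : forall x, Lp false x -> Lp true x -> x = 0;
  ls_linl : forall (c : F) x y z, br (c *: x + y) z = c *: br x z + br y z;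
  ls_linr : forall (c : F) x y z, br z (c *: x + y) = c *: br z x + br z y;
  ls_grad : forall i j a b, Lp i a -> Lp j b -> Lp (i (+) j) (br a b);
  ls_anti : forall i j a b, Lp i a -> Lp j b -> br a b = - (ssign i j *: br b a);
  ls_jacobi : forall i j a b c, Lp i a -> Lp j b ->
      br a (br b c) = br (br a b) c + ssign i j *: br b (br a c)
}.

Definition graded_ideal (br : L -> L -> L) (Lp : bool -> L -> Prop) (I : L -> Prop) : Prop :=
  [/\ subsp I,
      forall x y, I y -> I (br x y) /\ I (br y x) &
      forall x x0 x1, I x -> Lp false x0 -> Lp true x1 -> x = x0 + x1 -> I x0 /\ I x1].

(* I^{m+1} = 0 : all products (any bracketing) of m+1 elements of I vanish *)
Definition ideal_pow_zero (br : L -> L -> L) (I : L -> Prop) (m : nat) : Prop :=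
  forall (t : btree nat), size (leaves t) = m.+1 ->
  forall v : nat -> L, (forall i, I (v i)) -> beval br v t = 0.

(* dim (A / B) = d, for subspaces B <= A *)
Definition quot_dim (A B : L -> Prop) (d : nat) : Prop :=
  exists v : 'I_d -> L,
    [/\ forall i, A (v i),
        forall x, A x -> exists c : 'I_d -> F, B (x - \sum_i c i *: v i) &
        forall c : 'I_d -> F, B (\sum_i c i *: v i) -> forall i, c i = 0].

End LieSuper.

Local Close Scope ring_scope.
Definition is_partition (lam : seq nat) (k : nat) : bool :=
  [&& sorted geq lam, all (fun x => 0 < x) lam & sumn lam == k].

(* canonical Young tableau of shape lam: cells 0..k-1 filled row by row *)
Definition row_of (lam : seq nat) (i : nat) : nat :=
  find (fun r => i < sumn (take r.+1 lam)) (iota 0 (size lam)).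
Definition col_of (lam : seq nat) (i : nat) : nat :=
  i - sumn (take (row_of lam i) lam).

Definition rowstab k (lam : seq nat) (s : {perm 'I_k}) : bool :=
  [forall i : 'I_k, row_of lam (s i) == row_of lam i].
Definition colstab k (lam : seq nat) (s : {perm 'I_k}) : bool :=
  [forall i : 'I_k, col_of lam (s i) == col_of lam i].

Definition young (F : fieldType) k (lam : seq nat) : {ffun {perm 'I_k} -> F} :=
  [ffun g => (\sum_(r : {perm 'I_k} | rowstab lam r)
              \sum_(c : {perm 'I_k} | colstab lam c && (r * c == g)%g)
                 ((-1) ^+ odd_perm c : F))%R].

Local Open Scope ring_scope.
Section Module.
Variables (F : fieldType) (L : lmodType F) (br : L -> L -> L) (Lp : bool -> L -> Prop).
Variables (k l : nat). (* l = n - k *)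

Definition grp : finType := ({perm 'I_k} * {perm 'I_l})%type.
(* composition g o h (first h, then g) *)
Definition gcomp (g h : grp) : grp := ((h.1 * g.1)%g, (h.2 * g.2)%g).
Definition ginv (g : grp) : grp := ((g.1)^-1%g, (g.2)^-1%g).

Definition gconv (a b : {ffun grp -> F}) : {ffun grp -> F} :=
  [ffun h => \sum_(g : grp) a g * b (gcomp (ginv g) h)].

(* the element e_lam e_mu, generating the irreducible module M_lam (x) M_mu *)
Definition young2 (lam mu : seq nat) : {ffun grp -> F} :=
  [ffun g => @young F k lam g.1 * @young F l mu g.2].

(* variables: inl i = x_i (even), inr j = y_j (odd) *)
Definition var : finType := ('I_k + 'I_l)%type.
Definition mono := btree var.
(* formal linear combinations of nonassociative monomials *)
Definition fpoly := seq (F * mono).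

Definition multilin (t : mono) : bool := perm_eq (leaves t) (enum var).
Definition in_P (f : fpoly) : bool := all (fun p => multilin p.2) f.

Definition relabel (g : grp) (v : var) : var :=
  match v with inl i => inl (g.1 i) | inr j => inr (g.2 j) end.

Definition gaact (a : {ffun grp -> F}) (f : fpoly) : fpoly :=
  flatten [seq [seq (a g * p.1, bmap (relabel g) p.2) | p <- f] | g <- enum grp].

Definition evalp (s0 : 'I_k -> L) (s1 : 'I_l -> L) (f : fpoly) : L :=
  \sum_(p <- f) p.1 *: beval br (fun v => match v with inl i => s0 i | inr j => s1 j end) p.2.

(* f = g modulo Id^gr(L) *)
Definition id_eq (f g : fpoly) : Prop :=
  forall (s0 : 'I_k -> L) (s1 : 'I_l -> L),
    (forall i, Lp false (s0 i)) -> (forall j, Lp true (s1 j)) -> evalp s0 s1 f = evalp s0 s1 g.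

(* m_{lam,mu} <> 0 : there is a nonzero S_k x S_l-module homomorphism from
   M_lam (x) M_mu = F[S_k x S_l] e_lam e_mu into P_{k,l}(L) = P_{k,l}/(P_{k,l} \cap Id^gr(L)).
   The homomorphism is given by a lift phi into P_{k,l}. *)
Definition mult_nonzero (lam mu : seq nat) : Prop :=
  let e := young2 lam mu in
  exists phi : {ffun grp -> F} -> fpoly,
    [/\ forall x, in_P (phi x),
        forall a b, id_eq (phi (gconv a e + gconv b e)) (phi (gconv a e) ++ phi (gconv b e)),
        forall a b, id_eq (phi (gconv b (gconv a e))) (gaact b (phi (gconv a e))) &
        exists a, ~ id_eq (phi (gconv a e)) [::]].

End Module.

(* Main.v *)
Require Import Defs.
From HB Require Import structures.
From mathcomp Require Import all_boot all_order all_algebra all_fingroup.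
From mathcomp Require Import zify.

Lemma sumn_take_mono (s : seq nat) r r' : r <= r' -> sumn (take r s) <= sumn (take r' s).
Proof. by move=> H; rewrite -(subnKC H) takeD sumn_cat leq_addr. Qed.

Lemma sumn_take_S (s : seq nat) r : r < size s -> sumn (take r.+1 s) = sumn (take r s) + nth 0 s r.
Proof. by move=> H; rewrite (take_nth 0 H) -cats1 sumn_cat /= addn0. Qed.

Lemma sumn_take_le (s : seq nat) r : sumn (take r s) <= sumn s.
Proof. by rewrite -{2}(cat_take_drop r s) sumn_cat leq_addr. Qed.

Lemma row_ofP (lam : seq nat) i : i < sumn lam ->
  [/\ row_of lam i < size lam, sumn (take (row_of lam i) lam) <= i
    & i < sumn (take (row_of lam i).+1 lam)].
Proof.
move=> Hi.
have Hn : 0 < size lam by case: lam Hi.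
set P := (fun r => i < sumn (take r.+1 lam)).
have hasP : has P (iota 0 (size lam)).
  apply/hasP; exists (size lam).-1; first by rewrite mem_iota /= add0n prednK // leqnn.
  by rewrite /P prednK // take_size.
have Hlt : row_of lam i < size lam.
  by rewrite /row_of -[X in _ < X](size_iota 0 (size lam)) -has_find.
have HP := nth_find 0 hasP.
rewrite nth_iota // add0n in HP.
split => //.
case E: (row_of lam i) => [|r]; first by rewrite take0.
have Hb : ~~ P (nth 0 (iota 0 (size lam)) r).
  by apply/negbT/(before_find 0); rewrite -/(row_of lam i) E.
rewrite nth_iota ?add0n in Hb; last by rewrite (ltn_trans _ Hlt) // E.
by rewrite /P -leqNgt in Hb.
Qed.

Lemma row_of_uniq (lam : seq nat) i r : r < size lam ->
  sumn (take r lam) <= i < sumn (take r.+1 lam) -> row_of lam i = r.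
Proof.
move=> Hr /andP [H1 H2].
have Hi : i < sumn lam by apply: (leq_trans H2); apply: sumn_take_le.
have [A B C] := row_ofP _ _ Hi.
case: (ltngtP (row_of lam i) r) => // H.
- have := sumn_take_mono lam _ _ H. move=> /(leq_trans)/(_ H1). by rewrite leqNgt C.
- have := sumn_take_mono lam _ _ H. move=> /(leq_trans)/(_ B). by rewrite leqNgt H2.
Qed.

Lemma cell_rowcol (lam : seq nat) r c : r < size lam -> c < nth 0 lam r ->
  row_of lam (sumn (take r lam) + c) = r /\ col_of lam (sumn (take r lam) + c) = c.
Proof.
move=> Hr Hc.
have Hrow : row_of lam (sumn (take r lam) + c) = r.
  by apply: row_of_uniq => //; rewrite leq_addr /= sumn_take_S // ltn_add2l.
by split => //; rewrite /col_of Hrow addKn.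
Qed.

Lemma col_of_lt (lam : seq nat) i : i < sumn lam -> col_of lam i < nth 0 lam (row_of lam i).
Proof.
move=> Hi; have [A B C] := row_ofP _ _ Hi.
rewrite /col_of ltn_subLR // -sumn_take_S //.
Qed.

Lemma col_of_le (lam : seq nat) i : col_of lam i <= i.
Proof. exact: leq_subr. Qed.

Lemma card_set_nat (T : finType) (P : pred T) : #|[set x | P x]| = \sum_(x : T) (P x : nat).
Proof.
rewrite -sum1_card big_mkcond /=; apply: eq_bigr => x _; rewrite inE; by case: (P x).
Qed.

Lemma card_partition_col k (p : 'I_k -> 'I_k.+1) (Q : pred 'I_k) :
  #|[set i | Q i]| = \sum_(c : 'I_k.+1) #|[set i | (p i == c) && Q i]|.
Proof.
rewrite card_set_nat.
under [RHS]eq_bigr => c _ do rewrite card_set_nat.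
rewrite exchange_big /=; apply: eq_bigr => i _.
rewrite (bigD1 (p i)) //= eqxx /= big1 ?addn0 // => c /negbTE Hc.
by rewrite eq_sym Hc.
Qed.

Lemma card_below k (S : nat) (P : pred 'I_k) : (forall i, P i -> i < S) -> #|[set i | P i]| <= S.
Proof.
move=> H.
rewrite cardE -(size_map val).
rewrite -(size_iota 0 S); apply: uniq_leq_size.
  by rewrite map_inj_uniq ?enum_uniq //; apply: val_inj.
move=> x /mapP [i]; rewrite mem_enum inE => Pi ->.
by rewrite mem_iota /= add0n H.
Qed.

Lemma pigeon k d (lam : seq nat) (g : 'I_k -> option 'I_d) :
  is_partition lam k ->
  (forall i i' : 'I_k, i != i' -> col_of lam i = col_of lam i' -> g i = g i' -> g i = None) ->
  sumn (drop d lam) <= #|[set i | g i == None]|.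
Proof.
case/and3P => Hsort Hpos /eqP Hsum Hinj.
pose row (i : 'I_k) := row_of lam i.
pose col (i : 'I_k) := col_of lam i.
have Hik (i : 'I_k) : i < sumn lam by rewrite Hsum ltn_ord.
have Hcolk (i : 'I_k) : col i < k.+1 by rewrite ltnS (leq_trans (col_of_le _ _)) // ltnW.
pose p (i : 'I_k) : 'I_k.+1 := inord (col i).
have pE i i' : (p i == p i') = (col i == col i').
  apply/eqP/eqP => [H|H]; last by rewrite /p H.
  have := congr1 val H; rewrite /p /= !inordK //.
have percol (c : 'I_k.+1) :
  #|[set i | (p i == c) && (d <= row i)]| <= #|[set i | (p i == c) && (g i == None)]|.
  set Ac := [set i | p i == c].
  have E1 : #|[set i | (p i == c) && (d <= row i)]| + #|[set i | (p i == c) && (row i < d)]| = #|Ac|.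
    rewrite -(cardsID [set i | row i < d] Ac) addnC.
    congr (_ + _); apply: eq_card => i; rewrite !inE ltnNge;
    by case: (p i == c); case: (d <= row i).
  have E2 : #|[set i | (p i == c) && (g i == None)]| + #|[set i | (p i == c) && (g i != None)]| = #|Ac|.
    rewrite -(cardsID [set i | g i != None] Ac) addnC.
    congr (_ + _); apply: eq_card => i; rewrite !inE;
    by case: (p i == c); case: (g i == None).
  set G := [set i | (p i == c) && (g i != None)].
  set Lo := [set i | (p i == c) && (row i < d)].
  suff HG : #|G| <= #|Lo|.
    have := E1; rewrite -E2 => E3.
    rewrite -(leq_add2r #|Lo|) E3 leq_add2l //.
  have GAc : #|G| <= #|Ac| by apply: subset_leq_card; apply/subsetP => i; rewrite !inE => /andP[].
  have Gd : #|G| <= d.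
    have inj : {in G &, injective g}.
      move=> i i'; rewrite !inE => /andP [/eqP pi gi] /andP [/eqP pi' gi'] Hg.
      apply/eqP; apply: contraT => Hne.
      have : g i = None.
        apply: (Hinj i i' Hne _ Hg); move: (pE i i'); rewrite pi pi' eqxx => /esym/eqP //.
      by move/eqP; rewrite (negbTE gi).
    rewrite -(card_in_imset inj).
    apply: (leq_trans (subset_leq_card (_ : g @: G \subset [set~ None]))); last first.
      by rewrite cardsC1 card_option card_ord.
    apply/subsetP => o /imsetP [i]; rewrite !inE => /andP [_ gi] ->; exact: gi.
  case: (boolP [exists i, (p i == c) && (d <= row i)]) => [/existsP [i0 /andP [/eqP pi0 Hi0]] | Hno].
  - apply: (leq_trans Gd).
    pose cell (r : 'I_d) : 'I_k := insubd i0 (sumn (take r lam) + col i0).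
    have [Hr0 _ _] := row_ofP _ _ (Hik i0).
    have Hcell (r : 'I_d) : [/\ r < size lam, col i0 < nth 0 lam r & sumn (take r lam) + col i0 < k].
      have Hrd : r <= row i0 by apply: ltnW; apply: (leq_trans (ltn_ord r) Hi0).
      have Hrs : r < size lam by apply: (leq_ltn_trans Hrd Hr0).
      have Hc : col i0 < nth 0 lam r.
        apply: (leq_trans (col_of_lt _ _ (Hik i0))).
        have geq_tr : transitive geq by move=> a b c' H1 H2; apply: leq_trans H2 H1.
        have := sorted_leq_nth geq_tr (fun x => leqnn x) 0 Hsort.
        by move=> /(_ r (row i0)); rewrite !inE => /(_ Hrs Hr0 Hrd).
      split => //; rewrite -Hsum (leq_trans _ (sumn_take_le lam r.+1)) //.
      by rewrite sumn_take_S // ltn_add2l.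
    have cellv (r : 'I_d) : val (cell r) = sumn (take r lam) + col i0.
      by rewrite /cell val_insubd; case: (Hcell r) => _ _ ->.
    have cellrc (r : 'I_d) : row (cell r) = r /\ col (cell r) = col i0.
      by rewrite /row /col cellv; case: (Hcell r) => H1 H2 _; apply: cell_rowcol.
    have injc : injective cell.
      move=> r r' H; apply: val_inj => /=.
      by rewrite -(proj1 (cellrc r)) -(proj1 (cellrc r')) H.
    rewrite -{1}(card_ord d) -(card_imset _ injc).
    apply: subset_leq_card; apply/subsetP => x /imsetP [r _ ->].
    rewrite inE; have [H1 H2] := cellrc r.
    by rewrite H1 ltn_ord andbT -pi0 pE H2.
  - apply: (leq_trans GAc); apply: subset_leq_card; apply/subsetP => i; rewrite !inE => pi.
    rewrite pi /= ltnNge; apply: contra Hno => Hdi; apply/existsP; exists i; by rewrite pi.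
have Hpart := card_partition_col _ p.
have Hhi : sumn (drop d lam) <= #|[set i | d <= row i]|.
  have E : #|[set i | d <= row i]| + #|[set i | row i < d]| = k.
    rewrite -[RHS](card_ord k) -(cardsC [set i | row i < d]) addnC; congr (_ + _).
    by apply: eq_card => i; rewrite !inE ltnNge negbK.
  have Hlo : #|[set i | row i < d]| <= sumn (take d lam).
    apply: card_below => i Hi.
    have [_ _ C] := row_ofP _ _ (Hik i).
    by apply: (leq_trans C); apply: sumn_take_mono.
  have Hk : sumn (take d lam) + sumn (drop d lam) = k by rewrite -sumn_cat cat_take_drop.
  move: E Hlo Hk; lia.
apply: (leq_trans Hhi).
rewrite (Hpart (fun i => d <= row i)) (Hpart (fun i => g i == None)).
by apply: leq_sum => c _; apply: percol.
Qed.

Set Implicit Arguments. Unset Strict Implicit. Unset Printing Implicit Defensive.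
Import GRing.Theory.
Local Open Scope ring_scope.

Lemma beval_ext A L' (br : L' -> L' -> L') (v v' : A -> L') t :
  (forall a, v a = v' a) -> beval br v t = beval br v' t.
Proof. by move=> H; elim: t => [a|t1 IH1 t2 IH2] //=; rewrite IH1 IH2. Qed.

Lemma beval_bmap A B L' (br : L' -> L' -> L') (f : A -> B) (v : B -> L') t :
  beval br v (bmap f t) = beval br (fun a => v (f a)) t.
Proof. by elim: t => [a|t1 IH1 t2 IH2] //=; rewrite IH1 IH2. Qed.

Lemma leaves_bmap A B (f : A -> B) t : leaves (bmap f t) = map f (leaves t).
Proof. by elim: t => [a|t1 IH1 t2 IH2] //=; rewrite IH1 IH2 map_cat. Qed.

Section Alg.
Variables (F : fieldType) (L : lmodType F) (br : L -> L -> L) (Lp : bool -> L -> Prop) (I : L -> Prop).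
Hypothesis HL : lie_super br Lp.
Hypothesis HI : graded_ideal br Lp I.

Lemma brDl x y z : br (x + y) z = br x z + br y z.
Proof. by have := ls_linl HL 1 x y z; rewrite !scale1r. Qed.
Lemma brDr x y z : br z (x + y) = br z x + br z y.
Proof. by have := ls_linr HL 1 x y z; rewrite !scale1r. Qed.
Lemma br0l z : br 0 z = 0.
Proof. by apply/(addrI (br 0 z)); rewrite -brDl !addr0. Qed.
Lemma br0r z : br z 0 = 0.
Proof. by apply/(addrI (br z 0)); rewrite -brDr !addr0. Qed.
Lemma brZl c x z : br (c *: x) z = c *: br x z.
Proof. by have := ls_linl HL c x 0 z; rewrite addr0 br0l addr0. Qed.
Lemma brZr c x z : br z (c *: x) = c *: br z x.
Proof. by have := ls_linr HL c x 0 z; rewrite addr0 br0r addr0. Qed.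

Lemma subsp_add (A : L -> Prop) : subsp A -> forall x y, A x -> A y -> A (x + y).
Proof. by case=> _ H x y Hx Hy; have := H 1 x y Hx Hy; rewrite scale1r. Qed.
Lemma subsp_scale (A : L -> Prop) : subsp A -> forall c x, A x -> A (c *: x).
Proof. by case=> H0 H c x Hx; have := H c x 0 Hx H0; rewrite addr0. Qed.

Definition homog x := exists b, Lp b x.

Lemma Lp_scale b c x : Lp b x -> Lp b (c *: x).
Proof. exact: subsp_scale (ls_sub HL b) c x. Qed.
Lemma I_scale c x : I x -> I (c *: x).
Proof. by case: HI => Hs _ _; apply: subsp_scale. Qed.

Inductive Gen : nat -> L -> Prop :=
| GLeaf x b : I x -> Lp b x -> Gen 1 x
| GNode a b x y : Gen a x -> Gen b y -> Gen (a + b) (br x y).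

Lemma Gen_prop c x : Gen c x -> [/\ I x, homog x & (0 < c)%N].
Proof.
elim=> [y b Iy Ly | a b y z _ [Iy [i Hy] Ha] _ [Iz [j Hz] Hb]].
  by split => //; exists b.
split; last by rewrite addn_gt0 Ha.
  by case: HI => _ H _; case: (H y z Iz).
by exists (i (+) j); apply: (ls_grad HL).
Qed.

Lemma Gen_scale c x a : Gen c x -> Gen c (a *: x).
Proof.
move=> H; elim: H a => [y b Iy Ly | a' b y z _ IH Gz _] a.
  by apply: (GLeaf (b := b)); [apply: I_scale | apply: Lp_scale].
by rewrite -brZl; apply: GNode.
Qed.

Inductive J (c : nat) : L -> Prop :=
| J0 : J c 0
| JS x y : Gen c x -> J c y -> J c (x + y).

Lemma J_add c x y : J c x -> J c y -> J c (x + y).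
Proof. by elim=> [|u v Gu _ IH] Hy; rewrite ?add0r // -addrA; apply: JS => //; apply: IH. Qed.
Lemma J_scale c a x : J c x -> J c (a *: x).
Proof. elim=> [|u v Gu _ IH]; first by rewrite scaler0; apply: J0.
by rewrite scalerDr; apply: JS => //; apply: Gen_scale. Qed.
Lemma J_opp c x : J c x -> J c (- x).
Proof. by move=> H; rewrite -scaleN1r; apply: J_scale. Qed.
Lemma J_gen c x : Gen c x -> J c x.
Proof. by move=> H; rewrite -[x]addr0; apply: JS => //; apply: J0. Qed.

Lemma brGJ a b y x : Gen a y -> J b x -> J (a + b) (br y x).
Proof.
move=> Gy; elim=> [|u v Gu _ IH]; first by rewrite br0r; apply: J0.
by rewrite brDr; apply: JS => //; apply: GNode.
Qed.
Lemma brJG a b y x : J a x -> Gen b y -> J (a + b) (br x y).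
Proof.
move=> Jx Gy; elim: Jx => [|u v Gu _ IH]; first by rewrite br0l; apply: J0.
by rewrite brDl; apply: JS => //; apply: GNode.
Qed.
Lemma brJJ a b y x : J a x -> J b y -> J (a + b) (br x y).
Proof.
move=> Jx Jy; elim: Jx => [|u v Gu _ IH]; first by rewrite br0l; apply: J0.
by rewrite brDl; apply: J_add => //; apply: brGJ.
Qed.

Lemma Gen_ideal c x : Gen c x -> forall z, homog z -> J c (br x z) /\ J c (br z x).
Proof.
elim=> [y b Iy Ly | a b p q Gp IHp Gq IHq] z [l Hz].
  case: HI => _ H _; case: (H z y Iy) => H1 H2.
  by split; apply: J_gen; [apply: (GLeaf (b := b (+) l)) | apply: (GLeaf (b := l (+) b))];
     rewrite //; apply: (ls_grad HL).
have [_ [i Hp] _] := Gen_prop Gp.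
have [_ [j Hq] _] := Gen_prop Gq.
have Hpq : Lp (i (+) j) (br p q) by apply: (ls_grad HL).
have H1 : J (a + b) (br (br p q) z).
  have E := ls_jacobi HL z Hp Hq.
  have -> : br (br p q) z = br p (br q z) - ssign F i j *: br q (br p z).
    by rewrite E addrK.
  apply: J_add.
    apply: brGJ => //; apply: (proj1 (IHq z _)); exists l => //.
  apply: J_opp; apply: J_scale; rewrite addnC; apply: brGJ => //.
  by apply: (proj1 (IHp z _)); exists l.
split => //.
rewrite (ls_anti HL Hz Hpq).
by apply: J_opp; apply: J_scale.
Qed.

Lemma brhJ c z y : homog z -> J c y -> J c (br z y).
Proof.
move=> Hz; elim=> [|u v Gu _ IH]; first by rewrite br0r; apply: J0.
by rewrite brDr; apply: J_add => //; apply: (proj2 (Gen_ideal Gu Hz)).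
Qed.
Lemma brJh c z y : homog z -> J c y -> J c (br y z).
Proof.
move=> Hz; elim=> [|u v Gu _ IH]; first by rewrite br0l; apply: J0.
by rewrite brDl; apply: J_add => //; apply: (proj1 (Gen_ideal Gu Hz)).
Qed.

Lemma Gen_weaken c x : Gen c x -> forall c', (0 < c')%N -> (c' <= c)%N -> Gen c' x.
Proof.
elim=> [y b Iy Ly | a b p q Gp IHp Gq IHq] c' H0 Hc.
  have E : c' = 1%N by lia.
  by rewrite E; apply: (GLeaf (b := b)).
have [Ipq [l Hl] _] := Gen_prop (GNode Gp Gq).
case: (ltnP 1 c') => H1.
  2: { have E : c' = 1%N by lia.
       by rewrite E; apply: (GLeaf (b := l)). }
have [_ _ Ha] := Gen_prop Gp.
have [_ _ Hb] := Gen_prop Gq.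
have -> : c' = (minn a c'.-1 + (c' - minn a c'.-1))%N by lia.
by apply: GNode; [apply: IHp | apply: IHq]; lia.
Qed.

Lemma Gen_tree c x : Gen c x -> exists (t : btree nat) (v : nat -> L),
  [/\ size (leaves t) = c, forall i, I (v i) & x = beval br v t].
Proof.
elim=> [y b Iy Ly | a b p q Gp [t1 [v1 [s1 I1 E1]]] Gq [t2 [v2 [s2 I2 E2]]]].
  by exists (BLeaf 0%N), (fun _ => y).
exists (BNode (bmap (fun i => i.*2) t1) (bmap (fun i => i.*2.+1) t2)).
exists (fun i => if odd i then v2 i./2 else v1 i./2).
split.
- by rewrite /= size_cat !leaves_bmap !size_map s1 s2.
- by move=> i; case: (odd i).
- rewrite /= !beval_bmap E1 E2; congr br; apply: beval_ext => i.
    by rewrite odd_double doubleK.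
  by rewrite /= odd_double /= uphalf_double.
Qed.

Lemma J_zero m c x : ideal_pow_zero br I m -> (m < c)%N -> J c x -> x = 0.
Proof.
move=> Hpow Hm; elim=> [|u v Gu _ ->] //; rewrite addr0.
have [_ _ Hc] := Gen_prop Gu.
have := Gen_weaken Gu (isT : (0 < m.+1)%N) Hm.
by case/Gen_tree => t [v' [s Iv ->]]; apply: Hpow.
Qed.

Lemma beval_homog A (w : A -> L) t : (forall a, homog (w a)) -> homog (beval br w t).
Proof.
move=> Hw; elim: t => [a|t1 [i H1] t2 [j H2]] //=.
by exists (i (+) j); apply: (ls_grad HL).
Qed.

Lemma beval_J A (w : A -> L) (N : pred A) t :
  (forall a, homog (w a)) -> (forall a, N a -> I (w a)) ->
  (0 < count N (leaves t))%N -> J (count N (leaves t)) (beval br w t).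
Proof.
move=> Hw HN; elim: t => [a|t1 IH1 t2 IH2] /=.
  rewrite addn0; case Na: (N a) => // _; apply: J_gen.
  by case: (Hw a) => b Hb; apply: (GLeaf (b := b)) => //; apply: HN.
rewrite count_cat.
case: (posnP (count N (leaves t1))) => H1; case: (posnP (count N (leaves t2))) => H2.
- by rewrite H1 H2.
- by rewrite H1 add0n => _; apply: brhJ; [apply: beval_homog | apply: IH2].
- by rewrite H2 addn0 => _; apply: brJh; [apply: beval_homog | apply: IH1].
- by move=> _; apply: brJJ; [apply: IH1 | apply: IH2].
Qed.

End Alg.

Section Poly.
Variables (F : fieldType) (L : lmodType F) (br : L -> L -> L) (Lp : bool -> L -> Prop).
Hypothesis HL : lie_super br Lp.
Variables (k l : nat).

Definition evalw (w : var k l -> L) (f : fpoly F k l) : L :=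
  \sum_(p <- f) p.1 *: beval br w p.2.

Definition par (a : var k l) : bool := if a is inr _ then true else false.
Definition parok (w : var k l -> L) := forall a, Lp (par a) (w a).

Lemma evalw_ext w w' f : (forall a, w a = w' a) -> evalw w f = evalw w' f.
Proof. by move=> H; apply: eq_bigr => p _; rewrite (beval_ext _ _ H). Qed.

Lemma id_eq_w f g : id_eq br Lp f g -> forall w, parok w -> evalw w f = evalw w g.
Proof.
move=> H w Hw.
have := H (fun i => w (inl i)) (fun j => w (inr j)) (fun i => Hw (inl i)) (fun j => Hw (inr j)).
rewrite /evalp -!/(evalw _ _).
by rewrite !(@evalw_ext _ w) //; case.
Qed.

Lemma evalw_cat w f g : evalw w (f ++ g) = evalw w f + evalw w g.
Proof. by rewrite /evalw big_cat. Qed.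

Lemma evalw_gaact w (a : {ffun grp k l -> F}) f :
  evalw w (gaact a f) = \sum_(g : grp k l) a g *: evalw (fun v => w (relabel g v)) f.
Proof.
rewrite /gaact /evalw big_flatten /= big_map big_enum /=.
apply: eq_bigr => g _; rewrite big_map scaler_sumr; apply: eq_bigr => p _ /=.
by rewrite beval_bmap scalerA.
Qed.

Definition dl (c : F) (g0 : grp k l) : {ffun grp k l -> F} :=
  [ffun g => if g == g0 then c else 0].

Lemma evalw_dl w c g0 f :
  evalw w (gaact (dl c g0) f) = c *: evalw (fun v => w (relabel g0 v)) f.
Proof.
rewrite evalw_gaact (bigD1 g0) //= ffunE eqxx big1 ?addr0 // => g /negbTE Hg.
by rewrite ffunE Hg scale0r.
Qed.

Lemma gconv_dl c g0 X : gconv (dl c g0) X = [ffun h => c * X (gcomp (ginv g0) h)].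
Proof.
apply/ffunP => h; rewrite !ffunE (bigD1 g0) //= ffunE eqxx big1 ?addr0 // => g /negbTE Hg.
by rewrite ffunE Hg mul0r.
Qed.

Definition wupd (w : var k l -> L) a x := fun a' => if a' == a then x else w a'.

Lemma beval_upd_notin w a x (t : mono k l) : a \notin leaves t ->
  beval br (wupd w a x) t = beval br w t.
Proof.
elim: t => [b|t1 IH1 t2 IH2] /=.
  by rewrite inE /wupd eq_sym => /negbTE ->.
by rewrite mem_cat negb_or => /andP [H1 H2]; rewrite IH1 // IH2.
Qed.

Lemma beval_upd_lin w a c x y (t : mono k l) : count_mem a (leaves t) = 1%N ->
  beval br (wupd w a (c *: x + y)) t =
  c *: beval br (wupd w a x) t + beval br (wupd w a y) t.
Proof.
elim: t => [b|t1 IH1 t2 IH2] /=.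
  move=> H; have Hb : b == a.
    by move: H; rewrite addn0; case: (b == a) => //; case: (a == b).
  by rewrite /wupd Hb.
rewrite count_cat.
case: (posnP (count_mem a (leaves t1))) => H1.
  rewrite H1 add0n => H2.
  have N1 : a \notin leaves t1 by apply/count_memPn.
  by rewrite !(beval_upd_notin _ _ N1) IH2 // (ls_linr HL).
move=> H.
have H2 : count_mem a (leaves t2) = 0%N.
  by apply/eqP; rewrite -leqn0 -(leq_add2l (count_mem a (leaves t1))) H addn0.
have N2 : a \notin leaves t2 by apply/count_memPn.
have H1' : count_mem a (leaves t1) = 1%N by rewrite -H H2 addn0.
by rewrite !(beval_upd_notin _ _ N2) IH1 // (ls_linl HL).
Qed.

Lemma multilin_count (t : mono k l) a : multilin t -> count_mem a (leaves t) = 1%N.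
Proof.
rewrite /multilin => /seq.permP ->.
by rewrite count_uniq_mem ?enum_uniq // mem_enum.
Qed.

Lemma evalw_upd_lin w a c x y f : in_P f ->
  evalw (wupd w a (c *: x + y)) f = c *: evalw (wupd w a x) f + evalw (wupd w a y) f.
Proof.
rewrite /evalw; elim: f => [|p f IH] /=; first by rewrite !big_nil scaler0 addr0.
case/andP => Hp Hf; rewrite !big_cons IH // beval_upd_lin ?multilin_count //.
by rewrite !scalerDr !scalerA mulrC addrACA.
Qed.

End Poly.

Lemma colstabP k lam (s : {perm 'I_k}) :
  reflect (forall i : 'I_k, col_of lam (s i) = col_of lam i) (colstab lam s).
Proof. by apply: (iffP forallP) => H i; [apply/eqP | apply/eqP]. Qed.

Lemma colstabM k lam (s t : {perm 'I_k}) : colstab lam s -> colstab lam t -> colstab lam (s * t)%g.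
Proof. by move=> /colstabP Hs /colstabP Ht; apply/colstabP => i; rewrite permM Ht Hs. Qed.

Lemma colstabV k lam (s : {perm 'I_k}) : colstab lam s -> colstab lam s^-1%g.
Proof. by move=> /colstabP Hs; apply/colstabP => i; rewrite -{2}(permKV s i) Hs. Qed.

Lemma young_colmul (F : fieldType) k lam (h tau : {perm 'I_k}) : colstab lam tau ->
  young F k lam (h * tau^-1)%g = (-1) ^+ odd_perm tau * young F k lam h.
Proof.
move=> Ht; rewrite !ffunE mulr_sumr; apply: eq_bigr => r _; rewrite mulr_sumr.
rewrite (reindex_inj (mulIg (tau^-1)%g)) /=.
apply: eq_big => c.
  rewrite mulgA (inj_eq (mulIg _)); congr andb.
  apply/idP/idP => H; last by apply: colstabM => //; apply: colstabV.
  by rewrite -(mulgKV tau c); apply: colstabM.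
by move=> _; rewrite odd_permM odd_permV signr_addb mulrC.
Qed.

Lemma colstab_tperm k lam (i i' : 'I_k) : col_of lam i = col_of lam i' -> colstab lam (tperm i i').
Proof. by move=> H; apply/colstabP => x; case: tpermP => // ->. Qed.

Lemma young2E (F : fieldType) k l lam mu (g : grp k l) :
  young2 F k l lam mu g = young F k lam g.1 * young F l mu g.2.
Proof. by rewrite ffunE. Qed.

Lemma gconv_tperm_x (F : fieldType) k l lam mu (i i' : 'I_k) : i != i' -> col_of lam i = col_of lam i' ->
  gconv (dl (1 : F) ((tperm i i')%g, 1%g)) (young2 F k l lam mu) =
  gconv (dl (-1 : F) (1%g, 1%g)) (young2 F k l lam mu).
Proof.
move=> Hne Hc; rewrite !gconv_dl; apply/ffunP => h.
rewrite [LHS]ffunE [RHS]ffunE !young2E /gcomp /ginv /= !invg1 !mulg1 mul1r.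
rewrite young_colmul ?colstab_tperm // odd_tperm Hne expr1.
by rewrite mulN1r mulNr mulN1r.
Qed.

Lemma gconv_tperm_y (F : fieldType) k l lam mu (j j' : 'I_l) : j != j' -> col_of mu j = col_of mu j' ->
  gconv (dl (1 : F) (1%g, (tperm j j')%g)) (young2 F k l lam mu) =
  gconv (dl (-1 : F) (1%g, 1%g)) (young2 F k l lam mu).
Proof.
move=> Hne Hc; rewrite !gconv_dl; apply/ffunP => h.
rewrite [LHS]ffunE [RHS]ffunE !young2E /gcomp /ginv /= !invg1 !mulg1 mul1r.
rewrite young_colmul ?colstab_tperm // odd_tperm Hne expr1.
by rewrite mulrCA.
Qed.

Section Van.
Variables (F : fieldType) (L : lmodType F) (br : L -> L -> L) (Lp : bool -> L -> Prop) (I : L -> Prop).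
Hypothesis HL : lie_super br Lp.
Hypothesis HI : graded_ideal br Lp I.
Variables (m k l : nat).
Hypothesis Hpow : ideal_pow_zero br I m.
Hypothesis Hch : [pchar F] =i pred0.
Variable E : fpoly F k l.
Hypothesis HE : in_P E.

Lemma two_neq0 : (2%:R : F) != 0.
Proof. by have := Hch 2; rewrite !inE /= => ->. Qed.

Lemma eq_opp_zero (x : L) : x = - x -> x = 0.
Proof.
move=> H; have : (2%:R : F) *: x = 0 by rewrite scaler_nat mulr2n {1}H addNr.
by move/eqP; rewrite scaler_eq0 (negbTE two_neq0) /= => /eqP.
Qed.

Lemma relabel1 (a : var k l) : relabel (1%g, 1%g) a = a.
Proof. by case: a => x /=; rewrite perm1. Qed.

Lemma alt_zero (w : var k l -> L) (s : grp k l) : parok Lp w ->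
  id_eq br Lp (gaact (dl 1 s) E) (gaact (dl (-1) (1%g, 1%g)) E) ->
  (forall a, w (relabel s a) = w a) -> evalw br w E = 0.
Proof.
move=> Hw Hid Hs; have := id_eq_w Hid Hw; rewrite !evalw_dl scale1r scaleN1r.
rewrite (evalw_ext _ _ Hs) (@evalw_ext _ _ br _ _ (fun v => w (relabel (1%g,1%g) v)) w E).
  exact: eq_opp_zero.
by move=> a; rewrite relabel1.
Qed.

Lemma evalw_zero_each (w : var k l -> L) :
  (forall t : mono k l, multilin t -> beval br w t = 0) -> evalw br w E = 0.
Proof.
move=> H; move: HE; rewrite /evalw; elim: E => [|p f IH] /=; first by rewrite big_nil.
by case/andP => Hp Hf; rewrite big_cons IH // H // scaler0 add0r.
Qed.

Variables (b : bool) (d : nat) (v : 'I_d -> L).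
Hypothesis Hv : forall j, Lp b (v j).
Hypothesis Hdec : forall x, Lp b x -> exists c : 'I_d -> F,
  Lp b (x - \sum_j c j *: v j) /\ I (x - \sum_j c j *: v j).

Definition pure (a : var k l) (x : L) := par a = b -> (exists j, x = v j) \/ I x.

Lemma expand :
  (forall w, parok Lp w -> (forall a, pure a (w a)) -> evalw br w E = 0) ->
  forall (U : seq (var k l)) w, parok Lp w -> (forall a, a \notin U -> pure a (w a)) ->
  evalw br w E = 0.
Proof.
move=> Hbase; elim=> [|a U IH] w Hw Hp.
  by apply: Hbase => // a; apply: (Hp a); rewrite in_nil.
case: (boolP (par a == b)) => Hab; last first.
  apply: IH => // a' Ha'; case: (eqVneq a' a) => [->|Hne].
    by move=> Hpa; rewrite Hpa eqxx in Hab.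
  by apply: Hp; rewrite in_cons negb_or Hne.
move/eqP: Hab => Hab.
have Hwa : Lp b (w a) by rewrite -Hab; apply: Hw.
have [c [Hu Iu]] := Hdec Hwa.
set S := \sum_j c j *: v j in Hu Iu.
set g := fun x => evalw br (wupd w a x) E.
have gw : evalw br w E = g (w a).
  by apply: evalw_ext => a'; rewrite /wupd; case: eqP => [->|].
have Hlin := fun c x y => evalw_upd_lin HL w a c x y HE.
have gD x y : g (x + y) = g x + g y.
  by rewrite /g; have := Hlin 1 x y; rewrite !scale1r.
have g0 : g 0 = 0 by apply/(addrI (g 0)); rewrite -gD !addr0.
have gZ c' x : g (c' *: x) = c' *: g x by rewrite /g -[c' *: x]addr0 Hlin -/(g 0) g0 addr0.
have IHu x : Lp b x -> pure a x -> g x = 0.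
  move=> Hx Hpx; apply: IH.
    by move=> a'; rewrite /wupd; case: eqP => [->|_]; [rewrite Hab | apply: Hw].
  move=> a' Ha'; rewrite /wupd; case: eqP => [->|/eqP Hne] //.
  by apply: Hp; rewrite in_cons negb_or Hne.
rewrite gw -(subrK S (w a)) gD (IHu _ Hu) ?addr0; last by move=> _; right.
rewrite /S add0r; apply: (big_ind (fun x => g x = 0)) => //; first by move=> x y Hx Hy; rewrite gD Hx Hy addr0.
move=> j _; rewrite gZ IHu ?scaler0 //; last by move=> _; left; exists j.
Qed.

Lemma vanish :
  (forall w, parok Lp w -> (forall a, pure a (w a)) -> evalw br w E = 0) ->
  forall w, parok Lp w -> evalw br w E = 0.
Proof.
move=> Hbase w Hw; apply: (expand Hbase (U := enum (var k l))) => // a.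
by rewrite mem_enum.
Qed.

End Van.

Lemma count_N_x k l d (chi : 'I_k -> option 'I_d) :
  count (fun a : var k l => if a is inl i then chi i == None else false) (enum (var k l)) =
  #|[set i | chi i == None]|.
Proof.
rewrite -sum1_count big_enum_cond /= big_mkcond /= big_sumType /= [X in (_ + X)%N]big1 // addn0.
rewrite card_set_nat; apply: eq_bigr => i _; by case: (chi i == None).
Qed.
Lemma count_N_y k l d (chi : 'I_l -> option 'I_d) :
  count (fun a : var k l => if a is inr i then chi i == None else false) (enum (var k l)) =
  #|[set i | chi i == None]|.
Proof.
rewrite -sum1_count big_enum_cond /= big_mkcond /= big_sumType /= [X in (X + _)%N]big1 // add0n.
rewrite card_set_nat; apply: eq_bigr => i _; by case: (chi i == None).
Qed.

Section Base.
Variables (F : fieldType) (L : lmodType F) (br : L -> L -> L) (Lp : bool -> L -> Prop) (I : L -> Prop).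
Hypothesis HL : lie_super br Lp.
Hypothesis HI : graded_ideal br Lp I.
Variables (m k l : nat).
Hypothesis Hpow : ideal_pow_zero br I m.
Hypothesis Hch : [pchar F] =i pred0.
Variable E : fpoly F k l.
Hypothesis HE : in_P E.
Variables (d : nat) (v : 'I_d -> L).

Lemma base_x (lam : seq nat) : is_partition lam k -> (m < sumn (drop d lam))%N ->
  (forall i i' : 'I_k, i != i' -> col_of lam i = col_of lam i' ->
     id_eq br Lp (gaact (dl 1 ((tperm i i')%g, 1%g)) E) (gaact (dl (-1) (1%g, 1%g)) E)) ->
  forall w, parok Lp w -> (forall a, pure I false v a (w a)) -> evalw br w E = 0.
Proof.
move=> Hpart Hm Halt w Hw Hp.
pose chi (i : 'I_k) := [pick j | w (inl i) == v j].
pose N (a : var k l) := if a is inl i then chi i == None else false.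
have chiS i j : chi i = Some j -> w (inl i) = v j.
  by rewrite /chi; case: pickP => // j' /eqP H [<-].
have HN a : N a -> I (w a).
  case: a => [i|j] //=; rewrite /chi; case: pickP => // Hno _.
  case: (Hp (inl i) erefl) => [[j Ej]|] //.
  by move: (Hno j); rewrite Ej eqxx.
have Hh a : homog Lp (w a) by exists (par a); apply: Hw.
case: (ltnP m (count N (enum (var k l)))) => Hc.
  apply: evalw_zero_each => // t Ht.
  have Ec : count N (leaves t) = count N (enum (var k l)) by apply/seq.permP.
  apply: (J_zero HL HI Hpow (c := count N (leaves t))); first by rewrite Ec.
  by apply: beval_J => //; rewrite Ec; apply: leq_ltn_trans Hc.
have Hcnt : count N (enum (var k l)) = #|[set i | chi i == None]| := count_N_x l chi.
case: (boolP [forall i : 'I_k, forall i' : 'I_k, ((i != i') && (col_of lam i == col_of lam i') && (chi i == chi i'))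
               ==> (chi i == None)]) => Hall.
  exfalso.
  have := pigeon _ d lam chi Hpart.
  have H : forall i i' : 'I_k, i != i' -> col_of lam i = col_of lam i' -> chi i = chi i' -> chi i = None.
    move=> i i' H1 /eqP H2 /eqP H3; move/forallP: Hall => /(_ i)/forallP/(_ i')/implyP.
    by rewrite H1 H2 H3 /= => /(_ isT)/eqP.
  move=> /(_ H); rewrite -Hcnt; lia.
move/forallPn: Hall => [i /forallPn [i']].
rewrite negb_imply => /andP [/andP [/andP [Hne /eqP Hcol] /eqP Hchi] HnN].
case Ec: (chi i) HnN Hchi => [j|] // _ Hchi'.
have Ei := chiS _ _ Ec.
have Ei' := chiS i' j (esym Hchi').
apply: (alt_zero Hch Hw (Halt _ _ Hne Hcol)).
case => [x|y] /=; last by rewrite perm1.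
by case: tpermP => [->|->|] //; rewrite Ei Ei'.
Qed.

Lemma base_y (mu : seq nat) : is_partition mu l -> (m < sumn (drop d mu))%N ->
  (forall j j' : 'I_l, j != j' -> col_of mu j = col_of mu j' ->
     id_eq br Lp (gaact (dl 1 (1%g, (tperm j j')%g)) E) (gaact (dl (-1) (1%g, 1%g)) E)) ->
  forall w, parok Lp w -> (forall a, pure I true v a (w a)) -> evalw br w E = 0.
Proof.
move=> Hpart Hm Halt w Hw Hp.
pose chi (i : 'I_l) := [pick j | w (inr i) == v j].
pose N (a : var k l) := if a is inr i then chi i == None else false.
have chiS i j : chi i = Some j -> w (inr i) = v j.
  by rewrite /chi; case: pickP => // j' /eqP H [<-].
have HN a : N a -> I (w a).
  case: a => [i|j] //=; rewrite /chi; case: pickP => // Hno _.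
  case: (Hp (inr j) erefl) => [[j' Ej]|] //.
  by move: (Hno j'); rewrite Ej eqxx.
have Hh a : homog Lp (w a) by exists (par a); apply: Hw.
case: (ltnP m (count N (enum (var k l)))) => Hc.
  apply: evalw_zero_each => // t Ht.
  have Ec : count N (leaves t) = count N (enum (var k l)) by apply/seq.permP.
  apply: (J_zero HL HI Hpow (c := count N (leaves t))); first by rewrite Ec.
  by apply: beval_J => //; rewrite Ec; apply: leq_ltn_trans Hc.
have Hcnt : count N (enum (var k l)) = #|[set i | chi i == None]| := count_N_y k chi.
case: (boolP [forall i : 'I_l, forall i' : 'I_l, ((i != i') && (col_of mu i == col_of mu i') && (chi i == chi i'))
               ==> (chi i == None)]) => Hall.
  exfalso.
  have := pigeon _ d mu chi Hpart.
  have H : forall i i' : 'I_l, i != i' -> col_of mu i = col_of mu i' -> chi i = chi i' -> chi i = None.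
    move=> i i' H1 /eqP H2 /eqP H3; move/forallP: Hall => /(_ i)/forallP/(_ i')/implyP.
    by rewrite H1 H2 H3 /= => /(_ isT)/eqP.
  move=> /(_ H); rewrite -Hcnt; lia.
move/forallPn: Hall => [i /forallPn [i']].
rewrite negb_imply => /andP [/andP [/andP [Hne /eqP Hcol] /eqP Hchi] HnN].
case Ec: (chi i) HnN Hchi => [j|] // _ Hchi'.
have Ei := chiS _ _ Ec.
have Ei' := chiS i' j (esym Hchi').
apply: (alt_zero Hch Hw (Halt _ _ Hne Hcol)).
case => [x|y] /=; first by rewrite perm1.
by case: tpermP => [->|->|] //; rewrite Ei Ei'.
Qed.

End Base.

Unset Implicit Arguments.
Theorem lemma3 (F : fieldType) (L : lmodType F) (br : L -> L -> L)
    (Lp : bool -> L -> Prop) (I : L -> Prop) (m d0 d1 k n : nat) (lam mu : seq nat) :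
  [pchar F] =i pred0 ->
  lie_super br Lp ->
  graded_ideal br Lp I ->
  ideal_pow_zero br I m ->
  quot_dim (Lp false) (fun x => Lp false x /\ I x) d0 ->
  quot_dim (Lp true) (fun x => Lp true x /\ I x) d1 ->
  (k <= n)%N ->
  is_partition lam k ->
  is_partition mu (n - k) ->
  mult_nonzero br Lp k (n - k) lam mu ->
  (sumn (drop d0 lam) <= m)%N /\ (sumn (drop d1 mu) <= m)%N.
Proof.
move=> Hch HL HI Hpow [v0 [Hv0 Hd0 _]] [v1 [Hv1 Hd1 _]] Hkn Hlam Hmu [phi [HP _ H3 [a Ha]]].
set e := young2 F k (n - k) lam mu.
have e1 : gconv (dl 1 (1%g, 1%g)) e = e.
  rewrite gconv_dl; apply/ffunP => h; rewrite ffunE /gcomp /ginv /= !invg1 !mulg1 mul1r.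
  by case: h.
have H3' b : id_eq br Lp (phi (gconv b e)) (gaact b (phi e)).
  by have := H3 (dl 1 (1%g, 1%g)) b; rewrite e1.
set E := phi e.
have HE : in_P E := HP e.
have nz : ~ (forall w, parok Lp w -> evalw br w E = 0).
  move=> Hz; apply: Ha => s0 s1 Hs0 Hs1.
  set W := fun v => match v with inl i => s0 i | inr j => s1 j end.
  have HW : parok Lp W by case.
  rewrite (H3' a s0 s1 Hs0 Hs1) /evalp big_nil.
  rewrite -/(evalw br W (gaact a E)) evalw_gaact big1 // => g _.
  by rewrite Hz ?scaler0 //; case => [i|j] /=; rewrite /W; [apply: Hs0 | apply: Hs1].
have Halt_eq b1 b2 : gconv b1 e = gconv b2 e -> id_eq br Lp (gaact b1 E) (gaact b2 E).
  move=> Hb s0 s1 Hs0 Hs1.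
  by rewrite -(H3' b1 s0 s1 Hs0 Hs1) -(H3' b2 s0 s1 Hs0 Hs1) Hb.
split; rewrite leqNgt; apply/negP => Hm; apply: nz.
- move=> w Hw; apply: (vanish (I := I) HL HE (b := false) (v := v0) Hv0 _ _ Hw).
    by move=> x Hx; have [c Hc] := Hd0 x Hx; exists c.
  apply: (base_x HL HI Hpow Hch HE Hlam Hm).
  by move=> i i' Hne Hcol; apply: Halt_eq; apply: gconv_tperm_x.
- move=> w Hw; apply: (vanish (I := I) HL HE (b := true) (v := v1) Hv1 _ _ Hw).
    by move=> x Hx; have [c Hc] := Hd1 x Hx; exists c.
  apply: (base_y HL HI Hpow Hch HE Hmu Hm).
  by move=> j j' Hne Hcol; apply: Halt_eq; apply: gconv_tperm_y.
Qed.
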